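(* Let $G_3$ be the graph with vertices $v_1,\dots,v_8$ and edges $a_1=v_1v_2$, $a_2=v_2v_3$, $a_3=v_3v_4$, $a_4=v_4v_5$, $a_5=v_1v_5$, $a_6=v_1v_8$, $a_7=v_2v_6$, $a_8=v_3v_6$, $a_9=v_4v_7$, $a_{10}=v_5v_8$, $a_{11}=v_6v_7$, $a_{12}=v_7v_8$. Let $\gamma_1=e_1+e_3+e_{10}+e_{11}$, $\gamma_2=e_2+e_4+e_6+e_{11}$, $\gamma_3=e_3+e_5+e_7+e_{12}$, $\gamma_4=e_2+e_5+e_6+e_7+e_8+2e_9+e_{10}$, $\gamma_5=e_2+e_3+e_5+e_6+e_7+e_9+e_{10}+e_{11}$, $\gamma_6=e_1+e_4+e_8+e_{12}$, $\gamma_7=e_2+e_4+e_5+e_6+e_7+e_8+e_9+e_{12}$, $\gamma_8=e_1+e_8+e_9+e_{10}$. Then any $\gamma\in S(G_3)$ can be uniquely written in one of the following five types, with $l_1,\dots,l_5\in\mathbb{N}$: $T_a$: $l_1\gamma_1+l_2\gamma_2+l_3\gamma_3+l_4\gamma_4+l_5\gamma_5$; $T_b$: $\gamma_8+l_1\gamma_1+l_2\gamma_2+l_3\gamma_3+l_4\gamma_4+l_5\gamma_8$; $T_{c_1}$: $\gamma_6+l_1\gamma_1+l_2\gamma_2+l_3\gamma_3+l_4\gamma_6+l_5\gamma_8$; $T_{c_2}$: $\gamma_4+\gamma_6+l_1\gamma_2+l_2\gamma_3+l_3\gamma_4+l_4\gamma_6+l_5\gamma_8$; $T_{c_3}$: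 $\gamma_7+l_1\gamma_2+l_2\gamma_3+l_3\gamma_4+l_4\gamma_6+l_5\gamma_7$.
   Context: For a finite graph $G$ with edges $a_1,\dots,a_n$, a magic labelling is an assignment of nonnegative integer labels $\alpha_i$ to the edges $a_i$ such that for every vertex $v$ the sum of the labels of the edges incident to $v$ equals the same number $s$ (the magic sum). A labelling is identified with $(\alpha_1,\dots,\alpha_n)\in\mathbb{N}^n$, and $S(G)$ is the set of all magic labellings. $e_i$ is the $i$-th unit vector of $\mathbb{R}^{12}$, $\mathbb{N}=\{0,1,2,\dots\}$. *)

(* Defs.v *)
From mathcomp Require Import all_boot.
Set Implicit Arguments. Unset Strict Implicit. Unset Printing Implicit Defensive.

(* A labelling of the 12 edges a_1..a_12: edge a_k is the index (k-1 : 'I_12). *)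
Definition lab := {ffun 'I_12 -> nat}.

Definition ladd (a b : lab) : lab := [ffun i => a i + b i].
Definition lscale (n : nat) (a : lab) : lab := [ffun i => n * a i].
Infix "⊕" := ladd (at level 50, left associativity).
Infix "⊙" := lscale (at level 40).

Definition e (k : nat) : lab := [ffun i : 'I_12 => nat_of_bool (i.+1 == k)].

Definition G3_ends (k : nat) : nat * nat :=
  match k with
  | 1 => (1, 2) | 2 => (2, 3) | 3 => (3, 4) | 4 => (4, 5)
  | 5 => (1, 5) | 6 => (1, 8) | 7 => (2, 6) | 8 => (3, 6)
  | 9 => (4, 7) | 10 => (5, 8) | 11 => (6, 7) | 12 => (7, 8)
  | _ => (0, 0)
  end.

Definition incident (v k : nat) : bool :=
  (v == fst (G3_ends k)) || (v == snd (G3_ends k)).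

(* magic labellings S(G_3): all vertex sums (over the vertices v_1..v_8) agree *)
Definition magic (a : lab) : Prop :=
  exists s : nat, forall v : 'I_8,
    \sum_(i : 'I_12 | incident v.+1 i.+1) a i = s.

Definition gamma1 : lab := e 1 ⊕ e 3 ⊕ e 10 ⊕ e 11.
Definition gamma2 : lab := e 2 ⊕ e 4 ⊕ e 6 ⊕ e 11.
Definition gamma3 : lab := e 3 ⊕ e 5 ⊕ e 7 ⊕ e 12.
Definition gamma4 : lab := e 2 ⊕ e 5 ⊕ e 6 ⊕ e 7 ⊕ e 8 ⊕ 2 ⊙ e 9 ⊕ e 10.
Definition gamma5 : lab := e 2 ⊕ e 3 ⊕ e 5 ⊕ e 6 ⊕ e 7 ⊕ e 9 ⊕ e 10 ⊕ e 11.
Definition gamma6 : lab := e 1 ⊕ e 4 ⊕ e 8 ⊕ e 12.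
Definition gamma7 : lab := e 2 ⊕ e 4 ⊕ e 5 ⊕ e 6 ⊕ e 7 ⊕ e 8 ⊕ e 9 ⊕ e 12.
Definition gamma8 : lab := e 1 ⊕ e 8 ⊕ e 9 ⊕ e 10.

Definition zero_lab : lab := [ffun _ => 0].

Inductive ty := Ta | Tb | Tc1 | Tc2 | Tc3.

Definition typed_form (t : ty) (l : nat * nat * nat * nat * nat) : lab :=
  let '(l1, l2, l3, l4, l5) := l in
  match t with
  | Ta  => l1 ⊙ gamma1 ⊕ l2 ⊙ gamma2 ⊕ l3 ⊙ gamma3 ⊕ l4 ⊙ gamma4 ⊕ l5 ⊙ gamma5
  | Tb  => gamma8 ⊕ l1 ⊙ gamma1 ⊕ l2 ⊙ gamma2 ⊕ l3 ⊙ gamma3 ⊕ l4 ⊙ gamma4 ⊕ l5 ⊙ gamma8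
  | Tc1 => gamma6 ⊕ l1 ⊙ gamma1 ⊕ l2 ⊙ gamma2 ⊕ l3 ⊙ gamma3 ⊕ l4 ⊙ gamma6 ⊕ l5 ⊙ gamma8
  | Tc2 => gamma4 ⊕ gamma6 ⊕ l1 ⊙ gamma2 ⊕ l2 ⊙ gamma3 ⊕ l3 ⊙ gamma4 ⊕ l4 ⊙ gamma6 ⊕ l5 ⊙ gamma8
  | Tc3 => gamma7 ⊕ l1 ⊙ gamma2 ⊕ l2 ⊙ gamma3 ⊕ l3 ⊙ gamma4 ⊕ l4 ⊙ gamma6 ⊕ l5 ⊙ gamma7
  end.

(* Main.v *)
Require Import Defs.
From mathcomp Require Import all_boot.
From mathcomp Require Import zify.

Lemma sumE (gamma: lab) v :
  \sum_(i < 12 | incident v i.+1) gamma i =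
  \sum_(0 <= i < 12) (if incident v i.+1 then gamma (inord i) else 0).
Proof. rewrite big_mkcond big_mkord; apply eq_bigr => i _; by rewrite inord_val. Qed.

Lemma lab_ext (f1 f2 : lab) :
  (forall j, j < 12 -> f1 (inord j) = f2 (inord j)) -> f1 = f2.
Proof. move=> H; apply/ffunP => i; rewrite -(inord_val i); exact: H. Qed.

Lemma laddE a b i : (a ⊕ b) i = a i + b i. Proof. by rewrite ffunE. Qed.
Lemma lscaleE n a i : (n ⊙ a) i = n * a i. Proof. by rewrite ffunE. Qed.
Lemma eE k (i : 'I_12) : e k i = (i.+1 == k). Proof. by rewrite ffunE. Qed.

Definition en (k j : nat) : nat := j.+1 == k.
Definition g1 j := en 1 j + en 3 j + en 10 j + en 11 j.
Definition g2 j := en 2 j + en 4 j + en 6 j + en 11 j.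
Definition g3 j := en 3 j + en 5 j + en 7 j + en 12 j.
Definition g4 j := en 2 j + en 5 j + en 6 j + en 7 j + en 8 j + 2 * en 9 j + en 10 j.
Definition g5 j := en 2 j + en 3 j + en 5 j + en 6 j + en 7 j + en 9 j + en 10 j + en 11 j.
Definition g6 j := en 1 j + en 4 j + en 8 j + en 12 j.
Definition g7 j := en 2 j + en 4 j + en 5 j + en 6 j + en 7 j + en 8 j + en 9 j + en 12 j.
Definition g8 j := en 1 j + en 8 j + en 9 j + en 10 j.

Definition F t l1 l2 l3 l4 l5 j :=
  match t with
  | Ta  => l1 * g1 j + l2 * g2 j + l3 * g3 j + l4 * g4 j + l5 * g5 j
  | Tb  => g8 j + l1 * g1 j + l2 * g2 j + l3 * g3 j + l4 * g4 j + l5 * g8 j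
  | Tc1 => g6 j + l1 * g1 j + l2 * g2 j + l3 * g3 j + l4 * g6 j + l5 * g8 j
  | Tc2 => g4 j + g6 j + l1 * g2 j + l2 * g3 j + l3 * g4 j + l4 * g6 j + l5 * g8 j
  | Tc3 => g7 j + l1 * g2 j + l2 * g3 j + l3 * g4 j + l4 * g6 j + l5 * g7 j
  end.

Lemma tfE t l1 l2 l3 l4 l5 (i : 'I_12) :
  typed_form t (l1, l2, l3, l4, l5) i = F t l1 l2 l3 l4 l5 i.
Proof.
case: t; rewrite /typed_form /gamma1 /gamma2 /gamma3 /gamma4 /gamma5 /gamma6 /gamma7 /gamma8
  !(laddE, lscaleE, eE) //.
Qed.

Lemma tfEj t l1 l2 l3 l4 l5 j : j < 12 ->
  typed_form t (l1, l2, l3, l4, l5) (inord j) = F t l1 l2 l3 l4 l5 j.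
Proof. by move=> hj; rewrite tfE inordK. Qed.


Lemma tf_inj t l t' l' : typed_form t l = typed_form t' l' -> (t, l) = (t', l').
Proof.
case: l => [[[[l1 l2] l3] l4] l5]; case: l' => [[[[m1 m2] m3] m4] m5] H.
move: (congr1 (fun f : lab => f (inord 0)) H) (congr1 (fun f : lab => f (inord 1)) H)
        (congr1 (fun f : lab => f (inord 2)) H) (congr1 (fun f : lab => f (inord 3)) H)
        (congr1 (fun f : lab => f (inord 4)) H) (congr1 (fun f : lab => f (inord 5)) H)
        (congr1 (fun f : lab => f (inord 6)) H) (congr1 (fun f : lab => f (inord 7)) H)
        (congr1 (fun f : lab => f (inord 8)) H) (congr1 (fun f : lab => f (inord 9)) H)
        (congr1 (fun f : lab => f (inord 10)) H) (congr1 (fun f : lab => f (inord 11)) H).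
rewrite !tfEj //; clear H.
case: t; case: t'; rewrite /F /g1 /g2 /g3 /g4 /g5 /g6 /g7 /g8 /en /=;
  move=> K0 K1 K2 K3 K4 K5 K6 K7 K8 K9 K10 K11;
  (try by exfalso; lia);
  (have [-> [-> [-> [-> ->]]]] :
      l1 = m1 /\ l2 = m2 /\ l3 = m3 /\ l4 = m4 /\ l5 = m5 by lia); done.
Qed.

Lemma tf_ex (gamma : lab) : magic gamma -> exists p, typed_form (fst p) (snd p) = gamma.
Proof.
move=> [s Hs].
move: (Hs (inord 0)) (Hs (inord 1)) (Hs (inord 2)) (Hs (inord 3))
      (Hs (inord 4)) (Hs (inord 5)) (Hs (inord 6)) (Hs (inord 7)).
rewrite !sumE !inordK // /index_iota /= !big_cons !big_nil /=.
move=> H0 H1 H2 H3 H4 H5 H6 H7.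
have [h1|h1] := leqP (2 * (gamma (inord 7))) (gamma (inord 8)).
  exists (Ta, ((gamma (inord 9)) + (gamma (inord 7)) - (gamma (inord 8)), (gamma (inord 10)) + (gamma (inord 7)) - (gamma (inord 9)), (gamma (inord 11)), (gamma (inord 7)), (gamma (inord 8)) - 2 * (gamma (inord 7)))).
  apply: lab_ext => j hj; rewrite tfEj // /F /g1 /g2 /g3 /g4 /g5 /g6 /g7 /g8 /en;
    do 12 (case: j hj => [|j] hj; [rewrite /=; lia|]); lia.

have [h2|h2] := boolP (((gamma (inord 7)) <= (gamma (inord 8))) && ((gamma (inord 7)) <= (gamma (inord 9)))).
  exists (Tb, ((gamma (inord 9)) - (gamma (inord 7)), (gamma (inord 10)) + (gamma (inord 7)) - (gamma (inord 9)), (gamma (inord 11)), (gamma (inord 8)) - (gamma (inord 7)), 2 * (gamma (inord 7)) - (gamma (inord 8)) - 1)).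
  move/andP: h2 => [h2 h3]. apply: lab_ext => j hj; rewrite tfEj // /F /g1 /g2 /g3 /g4 /g5 /g6 /g7 /g8 /en;
    do 12 (case: j hj => [|j] hj; [rewrite /=; lia|]); lia.

have [h3|h3] := boolP (((gamma (inord 8)) < (gamma (inord 7))) && ((gamma (inord 8)) <= (gamma (inord 9)))).
  exists (Tc1, ((gamma (inord 9)) - (gamma (inord 8)), (gamma (inord 10)) + (gamma (inord 8)) - (gamma (inord 9)), (gamma (inord 11)) + (gamma (inord 8)) - (gamma (inord 7)), (gamma (inord 7)) - 1 - (gamma (inord 8)), (gamma (inord 8)))).
  move/andP: h3 => [h3 h4]. apply: lab_ext => j hj; rewrite tfEj // /F /g1 /g2 /g3 /g4 /g5 /g6 /g7 /g8 /en;
    do 12 (case: j hj => [|j] hj; [rewrite /=; lia|]); lia.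

have [h4|h4] := leqP (gamma (inord 8)) (2 * (gamma (inord 9))).
  exists (Tc2, ((gamma (inord 10)), (gamma (inord 11)) + (gamma (inord 9)) - (gamma (inord 7)), (gamma (inord 8)) - (gamma (inord 9)) - 1, (gamma (inord 7)) - (gamma (inord 9)) - 1, 2 * (gamma (inord 9)) - (gamma (inord 8)))).
  apply: lab_ext => j hj; rewrite tfEj // /F /g1 /g2 /g3 /g4 /g5 /g6 /g7 /g8 /en;
    do 12 (case: j hj => [|j] hj; [rewrite /=; lia|]); lia.

exists (Tc3, ((gamma (inord 10)), (gamma (inord 11)) + (gamma (inord 9)) - (gamma (inord 7)), (gamma (inord 9)), (gamma (inord 7)) + (gamma (inord 9)) - (gamma (inord 8)), (gamma (inord 8)) - 1 - 2 * (gamma (inord 9)))).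
apply: lab_ext => j hj; rewrite tfEj // /F /g1 /g2 /g3 /g4 /g5 /g6 /g7 /g8 /en;
    do 12 (case: j hj => [|j] hj; [rewrite /=; lia|]); lia.

Qed.

Theorem mainTheorem7 (gamma : lab) :
  magic gamma ->
  exists! p : ty * (nat * nat * nat * nat * nat), typed_form (fst p) (snd p) = gamma.
Proof.
move=> /tf_ex [p Hp]; exists p; split => // p' Hp'.
case: p Hp => t l; case: p' Hp' => t' l' /= H' H.
by apply: tf_inj; rewrite H H'.
Qed.
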